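(* (Discrete Korn inequality for space groups.) Suppose that $\mathcal G$ is a space group and $\mathcal R\subset\mathcal G$ has Property 2. Then the seminorms $\|\cdot\|_{\mathcal R}$, $\|\cdot\|_{\mathcal R,0,0}$ and $u\mapsto\|\nabla_{\mathcal R}u\|_2$ on $U_{\mathrm{per}}$ are equivalent.
   Context: Euclidean group: $\mathrm E(n)$ consists of pairs $(A|b)$, $A\in\mathrm O(n)$, $b\in\mathbb R^n$, acting by $(A|b)\cdot x=Ax+b$, product $(A_1|b_1)(A_2|b_2)=(A_1A_2|b_1+A_1b_2)$; $\mathrm{rot}(A|b)=A$. A space group in $\mathrm E(n)$ is a discrete subgroup containing $n$ translations $(I|b)$ with linearly independent $b$'s. Standing setting: $d=d_1+d_2$; $\mathcal S<\mathrm E(d_2)$ is a space group with translation subgroup $\mathcal T_{\mathcal S}$; $A\oplus(B|b)=(\mathrm{diag}(A,B)|(0,b))$; $\mathcal G$ is a discrete subgroup of $\mathrm E(d)$ contained in $\{A\oplus s:A\in\mathrm O(d_1),s\in\mathcal S\}$ projecting onto $\mathcal S$; $\mathcal T\subset\mathcal G$ maps bijectively onto $\mathcal T_{\mathcal S}$. There is $m_0\in\mathbb N$ such that $\mathcal T^N=\{t^N:t\in\mathcal T\}$ is a normal subgroup iff $N\in\mathcal M=m_0\mathbb N$, then isomorphic to $\mathbb Z^{d_2}$ of finite index; $\mathcal C_N$ is a fixed set of representatives of $\mathcal G/\mathcal T^N$. $U_{\mathrm{per}}$: maps $u:\mathcal G\to\mathbb R^d$ that are $\mathcal T^N$-periodic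 for some $N\in\mathcal M$. $x_0\in\mathbb R^d$ with $g\mapsto g\cdot x_0$ injective; $d_{\mathrm{aff}}=\dim\mathrm{aff}(\mathcal G\cdot x_0)$; assumed $\mathcal G\cdot x_0\subset\{0_{d-d_{\mathrm{aff}}}\}\times\mathbb R^{d_{\mathrm{aff}}}$ and $\mathcal G$ acts trivially on $\mathbb R^{d-d_{\mathrm{aff}}}\times\{0\}$. For $\mathcal R\subset\mathcal G$, maps $v:\mathcal R\to\mathbb R^d$: $U_{\mathrm{iso}}(\mathcal R)$: $\exists a\in\mathbb R^d$, $S\in\mathrm{Skew}(d)$ with $\mathrm{rot}(g)v(g)=a+S(g\cdot x_0-x_0)$ on $\mathcal R$; $U_{\mathrm{iso},0,0}(\mathcal R)$: the same with $S=S_1\oplus0_{d_2\times d_2}$, $S_1\in\mathrm{Skew}(d_1)$. For finite $\mathcal R$ and $\mathcal T^N$-periodic $u$: $\|u\|_{\mathcal R}$ (resp. $\|u\|_{\mathcal R,0,0}$) $=\big(\frac1{|\mathcal C_N|}\sum_{g\in\mathcal C_N}\mathrm{dist}(u(g\,\cdot)|_{\mathcal R},U)^2\big)^{1/2}$ with $U=U_{\mathrm{iso}}(\mathcal R)$ (resp. $U_{\mathrm{iso},0,0}(\mathcal R)$); $\|\nabla_{\mathcal R}u\|_2=\big(\frac1{|\mathcal C_N|}\sum_{g\in\mathcal C_N}\sum_{h\in\mathcal R}|u(gh)-\mathrm{rot}(h)^Tu(g)|^2\big)^{1/2}$. Property 1: $\mathcal R$ finite, $\mathrm{id}\in\mathcal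 R$, $\mathrm{aff}(\mathcal R\cdot x_0)=\mathrm{aff}(\mathcal G\cdot x_0)$. Property 2: $\mathcal R$ finite, and there are $\mathcal R',\mathcal R''$ with $\mathrm{id}\in\mathcal R'$, $\mathcal R'$ generating $\mathcal G$, $\mathcal R''$ with Property 1, and $\{gh:g\in\mathcal R',h\in\mathcal R''\}\subset\mathcal R$. *)

(* Defs.v *)
From HB Require Import structures.
From mathcomp Require Import all_boot all_order all_algebra.
From mathcomp Require Import boolp classical_sets reals.
Set Implicit Arguments. Unset Strict Implicit. Unset Printing Implicit Defensive.
Import Order.TTheory GRing.Theory Num.Theory.
Local Open Scope ring_scope.
Local Open Scope classical_set_scope.

Section Euclid.
Variables (R : realType) (d : nat).

(* E(d): pairs (A|b); orthogonality of A is imposed by [is_subgroup]. *)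
Definition Eu := ('M[R]_d * 'cV[R]_d)%type.
Definition rot (g : Eu) : 'M[R]_d := g.1.
Definition transl_part (g : Eu) : 'cV[R]_d := g.2.
Definition emul (g h : Eu) : Eu := (g.1 *m h.1, g.2 + g.1 *m h.2).
Definition eid : Eu := (1%:M, 0).
(* inverse of (A|b) for orthogonal A *)
Definition einv (g : Eu) : Eu := (g.1^T, - (g.1^T *m g.2)).
Definition eact (g : Eu) (x : 'cV[R]_d) : 'cV[R]_d := g.1 *m x + g.2.
Definition epow (g : Eu) (n : nat) : Eu := iter n (emul g) eid.

Definition orthogonal_mx (A : 'M[R]_d) := A^T *m A = 1%:M.

Definition is_subgroup (H : set Eu) :=
  [/\ (forall g, H g -> orthogonal_mx (rot g)), H eid,
      (forall g h, H g -> H h -> H (emul g h)) &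
      (forall g, H g -> H (einv g))].

Definition is_discrete (H : set Eu) :=
  exists eps : R, 0 < eps /\
    forall g, H g ->
      (forall i j, `|rot g i j - (1%:M : 'M[R]_d) i j| < eps) ->
      (forall i, `|transl_part g i ord0| < eps) -> g = eid.

(* space group: discrete subgroup containing d translations (I|b_i)
   with linearly independent b_i (the columns of an invertible B) *)
Definition space_group (G : set Eu) :=
  [/\ is_subgroup G, is_discrete G &
      exists B : 'M[R]_d, B \in unitmx /\ forall i, G (1%:M, col i B)].

Definition transl_sub (G : set Eu) : set Eu := [set g | G g /\ rot g = 1%:M].

Definition powset (T : set Eu) (N : nat) : set Eu :=
  [set g | exists t, T t /\ g = epow t N].

Definition normal_sub (H G : set Eu) :=
  [/\ is_subgroup H, H `<=` G &
      forall g h, G g -> H h -> H (emul (emul g h) (einv g))].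

Definition is_reps (G H : set Eu) (C : seq Eu) :=
  [/\ uniq C, (forall c, c \in C -> G c),
      (forall g, G g -> exists2 c, c \in C & H (emul (einv c) g)) &
      (forall c c', c \in C -> c' \in C -> H (emul (einv c) c') -> c = c')].

Definition periodic (G H : set Eu) (u : Eu -> 'cV[R]_d) :=
  forall g t, G g -> H t -> u (emul g t) = u g.

Definition sqnorm (x : 'cV[R]_d) : R := \sum_i x i ord0 ^+ 2.

Definition Uiso (x0 : 'cV[R]_d) (Rs : seq Eu) (v : Eu -> 'cV[R]_d) :=
  exists (a : 'cV[R]_d) (S : 'M[R]_d), S^T = - S /\
    forall g, g \in Rs -> rot g *m v g = a + S *m (eact g x0 - x0).

(* U_iso,0,0(Rs) for the splitting d = d1 + (d - d1): S = S1 (+) 0 *)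
Definition Uiso00 (d1 : nat) (x0 : 'cV[R]_d) (Rs : seq Eu) (v : Eu -> 'cV[R]_d) :=
  exists (a : 'cV[R]_d) (S : 'M[R]_d), [/\ S^T = - S,
    (forall i j : 'I_d, ~~ ((i < d1)%N && (j < d1)%N) -> S i j = 0) &
    forall g, g \in Rs -> rot g *m v g = a + S *m (eact g x0 - x0)].

(* Euclidean distance of v|_Rs to U (U only depends on values on Rs) *)
Definition distU (U : (Eu -> 'cV[R]_d) -> Prop) (Rs : seq Eu) (v : Eu -> 'cV[R]_d) : R :=
  inf [set r : R | exists w, U w /\
         r = Num.sqrt (\sum_(h <- Rs) sqnorm (v h - w h))].

(* ||u||_Rs w.r.t. U, computed with representatives C of G/T^N *)
Definition normU (U : (Eu -> 'cV[R]_d) -> Prop) (C Rs : seq Eu) (u : Eu -> 'cV[R]_d) : R :=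
  Num.sqrt ((size C)%:R^-1 *
    \sum_(g <- C) (distU U Rs (fun h => u (emul g h))) ^+ 2).

Definition gradnorm (C Rs : seq Eu) (u : Eu -> 'cV[R]_d) : R :=
  Num.sqrt ((size C)%:R^-1 *
    \sum_(g <- C) \sum_(h <- Rs) sqnorm (u (emul g h) - (rot h)^T *m u g)).

Definition aff (P : set 'cV[R]_d) : set 'cV[R]_d :=
  [set x | exists s : seq ('cV[R]_d * R),
     [/\ forall p, p \in s -> P p.1,
         \sum_(p <- s) p.2 = 1 &
         x = \sum_(p <- s) p.2 *: p.1]].

Definition property1 (G : set Eu) (x0 : 'cV[R]_d) (Rs : seq Eu) :=
  [/\ uniq Rs, (forall h, h \in Rs -> G h), eid \in Rs &
      aff [set eact h x0 | h in [set h | h \in Rs]] = aff [set eact g x0 | g in G]].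

Definition generates (G R' : set Eu) :=
  R' `<=` G /\ forall H, is_subgroup H -> R' `<=` H -> G `<=` H.

Definition property2 (G : set Eu) (x0 : 'cV[R]_d) (Rs : seq Eu) :=
  [/\ uniq Rs, (forall h, h \in Rs -> G h) &
      exists (R' : set Eu) (R'' : seq Eu),
        [/\ R' eid, generates G R', property1 G x0 R'' &
            forall g h, R' g -> h \in R'' -> emul g h \in Rs]].

End Euclid.

(* Main.v *)
Require Import Defs.
From HB Require Import structures.
From mathcomp Require Import all_boot all_order all_algebra.
From mathcomp Require Import boolp classical_sets reals.
From mathcomp Require Import ring lra.
Set Implicit Arguments. Unset Strict Implicit. Unset Printing Implicit Defensive.
Import Order.TTheory GRing.Theory Num.Theory.
Local Open Scope ring_scope.
Local Open Scope classical_set_scope.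
Notation rot := Defs.rot.

Section Basics.
Variables (R : realType) (d : nat).
Local Notation Eu := (Eu R d).
Local Notation eid := (eid R d).
Implicit Types (g h k : Eu) (A B M Q : 'M[R]_d) (x y v : 'cV[R]_d).

Lemma emulA g h k : emul (emul g h) k = emul g (emul h k).
Proof.
case: g => [A a]; case: h => [B b]; case: k => [C c]; rewrite /emul /=.
by rewrite mulmxA mulmxDr addrA mulmxA.
Qed.

Lemma emul1g g : emul eid g = g.
Proof. by case: g => A a; rewrite /emul /eid /= !mul1mx add0r. Qed.

Lemma emulg1 g : emul g eid = g.
Proof. by case: g => A a; rewrite /emul /eid /= mulmx1 mulmx0 addr0. Qed.

Lemma orthC A : orthogonal_mx A -> A *m A^T = 1%:M.
Proof. by move=> h; apply: mulmx1C. Qed.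

Lemma emulVg g : orthogonal_mx (rot g) -> emul (einv g) g = eid.
Proof.
case: g => A a; rewrite /orthogonal_mx /rot /emul /einv /eid /= => h.
by rewrite h addrC subrr.
Qed.

Lemma emulgV g : orthogonal_mx (rot g) -> emul g (einv g) = eid.
Proof.
case: g => A a; rewrite /orthogonal_mx /rot /emul /einv /eid /= => h.
by rewrite orthC // mulmxN mulmxA orthC // mul1mx subrr.
Qed.

Lemma einvM g h : orthogonal_mx (rot g) ->
  einv (emul g h) = emul (einv h) (einv g).
Proof.
case: g => A a; case: h => B b; rewrite /orthogonal_mx /rot /emul /einv /= => hA.
rewrite trmx_mul; congr pair.
rewrite mulmxDr opprD addrC; congr (_ + _).
  by rewrite -!mulmxA (mulmxA A^T) hA mul1mx.
by rewrite mulmxN mulmxA.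

Qed.

Lemma einvK g : orthogonal_mx (rot g) -> einv (einv g) = g.
Proof.
case: g => A a; rewrite /orthogonal_mx /rot /einv /= => hA.
by rewrite trmxK mulmxN opprK mulmxA orthC // mul1mx.
Qed.

Lemma orth_trmx A : orthogonal_mx A -> orthogonal_mx A^T.
Proof. by rewrite /orthogonal_mx trmxK => h; apply: orthC. Qed.

Lemma orth_mul A B : orthogonal_mx A -> orthogonal_mx B -> orthogonal_mx (A *m B).
Proof.
rewrite /orthogonal_mx => hA hB; rewrite trmx_mul -mulmxA (mulmxA A^T) hA mul1mx.
exact: hB.
Qed.

Lemma rot_emul g h : rot (emul g h) = rot g *m rot h.
Proof. by []. Qed.

Lemma eactM g h x : eact (emul g h) x = eact g (eact h x).
Proof.
case: g => A a; case: h => B b; rewrite /eact /emul /=.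
by rewrite mulmxDr mulmxA -addrA (addrC a).
Qed.

Lemma eactB g x y : eact g x - eact g y = rot g *m (x - y).
Proof. rewrite /eact mulmxBr /rot; set u := g.1 *m x; set w := g.1 *m y.
by rewrite opprD addrACA subrr addr0.
Qed.

Lemma eact_id x : eact eid x = x.
Proof. by rewrite /eact /eid /= mul1mx addr0. Qed.

End Basics.

Section Norms.
Variable R : realType.

Definition frob m n (M : 'M[R]_(m, n)) : R := \sum_i \sum_j M i j ^+ 2.

Lemma CS_seq (I : Type) (s : seq I) (a b : I -> R) :
  (\sum_(i <- s) a i * b i) ^+ 2 <=
  (\sum_(i <- s) a i ^+ 2) * (\sum_(i <- s) b i ^+ 2).
Proof.
set A := \sum_(i <- s) a i ^+ 2; set B := \sum_(i <- s) b i ^+ 2.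
set P := \sum_(i <- s) a i * b i.
have E : \sum_(i <- s) \sum_(j <- s) (a i * b j - a j * b i) ^+ 2 =
         2 * (A * B - P ^+ 2).
  have pt : forall i j, (a i * b j - a j * b i) ^+ 2 =
     (a i ^+ 2 * b j ^+ 2 + b i ^+ 2 * a j ^+ 2) - 2 * ((a i * b i) * (a j * b j)).
    by move=> i j; ring.
  under eq_bigr => i _ do under eq_bigr => j _ do rewrite pt.
  under eq_bigr => i _ do rewrite sumrB big_split /= -!mulr_sumr.
  rewrite sumrB big_split /= -!mulr_suml -mulr_sumr -mulr_suml -/A -/B -/P.
  ring.
have : 0 <= 2 * (A * B - P ^+ 2).
  by rewrite -E; apply: sumr_ge0 => i _; apply: sumr_ge0 => j _; apply: sqr_ge0.
by rewrite pmulr_rge0 // subr_ge0.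
Qed.

Lemma sum_sq_ge0 (I : Type) (s : seq I) (a : I -> R) : 0 <= \sum_(i <- s) a i ^+ 2.
Proof. by apply: sumr_ge0 => i _; apply: sqr_ge0. Qed.

Lemma sqnorm_ge0 n (x : 'cV[R]_n) : 0 <= sqnorm x.
Proof. exact: sum_sq_ge0. Qed.

Lemma frob_ge0 m n (M : 'M[R]_(m, n)) : 0 <= frob M.
Proof. by apply: sumr_ge0 => i _; apply: sum_sq_ge0. Qed.

Lemma sqnormD2 n (x y : 'cV[R]_n) : sqnorm (x + y) <= 2 * sqnorm x + 2 * sqnorm y.
Proof.
rewrite /sqnorm !mulr_sumr -big_split /=; apply: ler_sum => i _.
rewrite mxE; set p := x i ord0; set q := y i ord0.
have : 0 <= (p - q) ^+ 2 by apply: sqr_ge0.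
by move=> h; rewrite -subr_ge0; apply: le_trans h _; rewrite le_eqVlt; apply/orP; left; apply/eqP; ring.
Qed.

Lemma sqnormN n (x : 'cV[R]_n) : sqnorm (- x) = sqnorm x.
Proof. by apply: eq_bigr => i _; rewrite mxE sqrrN. Qed.

Lemma sqnormB n (x y : 'cV[R]_n) : sqnorm (x - y) = sqnorm (y - x).
Proof. by rewrite -sqnormN opprB. Qed.

Lemma sqnorm_mulmx m n (M : 'M[R]_(m, n)) (v : 'cV[R]_n) :
  sqnorm (M *m v) <= frob M * sqnorm v.
Proof.
rewrite /sqnorm /frob mulr_suml; apply: ler_sum => i _.
by rewrite mxE; apply: CS_seq.
Qed.

Lemma frob_tr m n (M : 'M[R]_(m, n)) : frob M^T = frob M.
Proof. by rewrite /frob exchange_big; apply: eq_bigr => i _; apply: eq_bigr => j _; rewrite mxE. Qed.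

Lemma frob_mulmx m n p (M : 'M[R]_(m, n)) (N : 'M[R]_(n, p)) :
  frob (M *m N) <= frob M * frob N.
Proof.
rewrite /frob mulr_suml; apply: ler_sum => i _.
have -> : \sum_j \sum_k N j k ^+ 2 = \sum_k \sum_j N j k ^+ 2 by rewrite exchange_big.
rewrite mulr_sumr; apply: ler_sum => k _; rewrite mxE; exact: CS_seq.
Qed.

Lemma sqnorm_frob n (x : 'cV[R]_n) : sqnorm x = frob x.
Proof. by rewrite /frob; apply: eq_bigr => i _; rewrite big_ord1. Qed.

Lemma sqnorm_tr n (x : 'cV[R]_n) : sqnorm x = (x^T *m x) ord0 ord0.
Proof. by rewrite mxE; apply: eq_bigr => i _; rewrite mxE expr2. Qed.

Lemma sqnorm_orth n (Q : 'M[R]_n) (x : 'cV[R]_n) :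
  orthogonal_mx Q -> sqnorm (Q *m x) = sqnorm x.
Proof.
move=> hQ; rewrite !sqnorm_tr trmx_mul -mulmxA (mulmxA Q^T) hQ mul1mx //.
Qed.

Lemma frob_col m n (M : 'M[R]_(m, n)) : frob M = \sum_j sqnorm (col j M).
Proof.
rewrite /frob exchange_big; apply: eq_bigr => j _; apply: eq_bigr => i _.
by rewrite mxE.
Qed.

Lemma frob_orthl n p (Q : 'M[R]_n) (M : 'M[R]_(n, p)) :
  orthogonal_mx Q -> frob (Q *m M) = frob M.
Proof.
move=> hQ; rewrite !frob_col; apply: eq_bigr => j _.
by rewrite !colE -mulmxA sqnorm_orth.
Qed.

Lemma frob_orthr n p (Q : 'M[R]_n) (M : 'M[R]_(p, n)) :
  orthogonal_mx Q -> frob (M *m Q) = frob M.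
Proof.
move=> hQ; rewrite -frob_tr trmx_mul frob_orthl ?frob_tr //.
exact: orth_trmx.
Qed.

Lemma sqnorm_scale n (c : R) (x : 'cV[R]_n) : sqnorm (c *: x) = c ^+ 2 * sqnorm x.
Proof. by rewrite /sqnorm mulr_sumr; apply: eq_bigr => i _; rewrite mxE exprMn. Qed.

Lemma sqnorm_sum (I : Type) (s : seq I) (c : I -> R) n (v : I -> 'cV[R]_n) :
  sqnorm (\sum_(k <- s) c k *: v k) <=
  (\sum_(k <- s) c k ^+ 2) * \sum_(k <- s) sqnorm (v k).
Proof.
rewrite /sqnorm.
have -> : \sum_(k <- s) \sum_i v k i ord0 ^+ 2 = \sum_i \sum_(k <- s) v k i ord0 ^+ 2.
  by rewrite exchange_big.
rewrite mulr_sumr; apply: ler_sum => i _.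
rewrite summxE.
under eq_bigr => k _ do rewrite mxE.
exact: CS_seq.
Qed.

Lemma le_sum_mem (I : eqType) (s : seq I) (F : I -> R) x :
  (forall y, y \in s -> 0 <= F y) -> x \in s -> F x <= \sum_(y <- s) F y.
Proof.
move=> h xs; rewrite (big_rem x xs) /= lerDl big_seq; apply: sumr_ge0 => y ys.
by apply: h; apply: (mem_rem (x:=x)).
Qed.

End Norms.

Section Norms2.
Variable R : realType.
Lemma frobD2 m n (M N : 'M[R]_(m, n)) : frob (M + N) <= 2 * frob M + 2 * frob N.
Proof.
rewrite !frob_col !mulr_sumr -big_split /=; apply: ler_sum => j _.
by rewrite linearD /=; apply: sqnormD2.
Qed.
Lemma frobN m n (M : 'M[R]_(m, n)) : frob (- M) = frob M.
Proof. by rewrite /frob; apply: eq_bigr => i _; apply: eq_bigr => j _; rewrite mxE sqrrN. Qed.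
Lemma frob0 m n : frob (0 : 'M[R]_(m, n)) = 0.
Proof. by rewrite /frob big1 // => i _; rewrite big1 // => j _; rewrite mxE expr0n. Qed.
Lemma sqnorm0 n : sqnorm (0 : 'cV[R]_n) = 0.
Proof. by rewrite sqnorm_frob frob0. Qed.
End Norms2.

Section Group.
Variables (R : realType) (d : nat).
Local Notation Eu := (Eu R d).
Local Notation eid := (eid R d).
Implicit Types (g h k : Eu).

Lemma emulKV g x : orthogonal_mx (rot g) -> emul g (emul (einv g) x) = x.
Proof. by move=> o; rewrite -emulA emulgV // emul1g. Qed.

Lemma emulVK g x : orthogonal_mx (rot g) -> emul (einv g) (emul g x) = x.
Proof. by move=> o; rewrite -emulA emulVg // emul1g. Qed.

Lemma einv_id : einv eid = eid.
Proof. by rewrite /einv /eid /= trmx1 mul1mx oppr0. Qed.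

Variable G : set Eu.
Hypothesis hG : is_subgroup G.

Lemma G_orth g : G g -> orthogonal_mx (rot g).
Proof. by case: hG => o _ _ _; apply: o. Qed.
Lemma G_id : G eid. Proof. by case: hG. Qed.
Lemma G_mul g h : G g -> G h -> G (emul g h). Proof. by case: hG => _ _ m _; apply: m. Qed.
Lemma G_inv g : G g -> G (einv g). Proof. by case: hG => _ _ _ i; apply: i. Qed.

Section Reindex.
Variables (H : set Eu) (C : seq Eu).
Hypotheses (hN : normal_sub H G) (hC : is_reps G H C).

Definition per (T : Type) (f : Eu -> T) := forall g t, G g -> H t -> f (emul g t) = f g.

Lemma H_G t : H t -> G t. Proof. by case: hN => _ s _; apply: s. Qed.

Lemma H_conj w t : G w -> H t -> H (emul (emul (einv w) t) w).
Proof.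
move=> Gw Ht; case: hN => _ _ n.
by have := n (einv w) t (G_inv Gw) Ht; rewrite (einvK (G_orth Gw)).
Qed.

Lemma per_shift (T : Type) (f : Eu -> T) w : G w -> per f -> per (fun g => f (emul g w)).
Proof.
move=> Gw pf g t Gg Ht /=.
have -> : emul (emul g t) w = emul (emul g w) (emul (emul (einv w) t) w).
  by rewrite !emulA (emulKV _ (G_orth Gw)).
by apply: pf; [apply: G_mul | apply: H_conj].
Qed.

Lemma C_G c : c \in C -> G c. Proof. by case: hC => _ h _ _; apply: h. Qed.

Lemma reindexC (f : Eu -> R) w : G w -> per f ->
  \sum_(c <- C) f (emul c w) = \sum_(c <- C) f c.
Proof.
move=> Gw pf.
have ex : forall c, exists c', c \in C -> c' \in C /\ H (emul (einv c') (emul c w)).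
  move=> c; case: (boolP (c \in C)) => cC; last by exists c.
  case: hC => _ _ h3 _.
  have [c' c'C Hc'] := h3 _ (G_mul (C_G cC) Gw).
  by exists c'.
have [pi hpi] := choice ex.
have e1 : forall c, c \in C -> f (emul c w) = f (pi c).
  move=> c cC; have [piC Hp] := hpi c cC.
  rewrite -(emulKV (emul c w) (G_orth (C_G piC))).
  by apply: pf => //; apply: C_G.
rewrite big_seq [RHS]big_seq; under eq_bigr => c cC do rewrite e1 //.
rewrite -big_seq -[RHS]big_seq.
rewrite -(big_map pi xpredT f).
apply: perm_big.
have inj : {in C &, injective pi}.
  move=> c1 c2 c1C c2C e.
  have [p1C H1] := hpi c1 c1C; have [p2C H2] := hpi c2 c2C.
  rewrite e in H1.
  case: hC => _ _ _ h4; apply: h4 => //.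
  case: hN => [[_ _ hm hi] _ _].
  have H3 := hm _ _ (hi _ H1) H2.
  have := H_conj (G_inv Gw) H3.
  have o1 := G_orth (C_G c1C); have o2 := G_orth (C_G c2C).
  have op := G_orth (C_G p2C); have ow := G_orth Gw.
  have op' : orthogonal_mx (rot (einv (pi c2))) := orth_trmx op.
  rewrite (einvM _ op') (einvK op) (einvM _ o1) (einvK ow) !emulA.
  rewrite (emulKV _ ow) (emulKV _ op). rewrite (emulgV ow) emulg1.
  done.
have U : uniq C by case: hC.
have U' : uniq (map pi C) by rewrite map_inj_in_uniq.
have sub : {subset map pi C <= C}.
  by move=> x /mapP [c cC ->]; have [] := hpi c cC.
have [_ eqi] := uniq_min_size U' sub (eq_leq (esym (size_map pi C))).
exact: uniq_perm.
Qed.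

End Reindex.

Section Words.
Variable R' : set Eu.
Hypothesis hgen : generates G R'.

Definition S1 s := R' s \/ exists r, R' r /\ s = einv r.
Definition ev (l : seq Eu) := foldr (@emul R d) eid l.

Lemma R'_G r : R' r -> G r. Proof. by case: hgen => s _; apply: s. Qed.

Lemma S1_G s : S1 s -> G s.
Proof. by case=> [/R'_G // | [r [/R'_G Gr ->]]]; apply: G_inv. Qed.

Lemma S1_inv s : S1 s -> S1 (einv s).
Proof.
case=> [Rs | [r [Rr ->]]]; first by right; exists s.
by left; rewrite (einvK (G_orth (R'_G Rr))).
Qed.

Lemma ev_cat l1 l2 : ev (l1 ++ l2) = emul (ev l1) (ev l2).
Proof. by elim: l1 => [|s l IH] /=; rewrite ?emul1g // IH emulA. Qed.

Lemma ev_G l : (forall s, s \in l -> S1 s) -> G (ev l).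
Proof.
elim: l => [|s l IH] h /=; first exact: G_id.
apply: G_mul; first by apply: S1_G; apply: h; rewrite mem_head.
by apply: IH => x xl; apply: h; rewrite in_cons xl orbT.
Qed.

Lemma gen_words g : G g -> exists l, (forall s, s \in l -> S1 s) /\ g = ev l.
Proof.
pose H g := G g /\ exists l, (forall s, s \in l -> S1 s) /\ g = ev l.
suff : G `<=` H by move=> /(_ g) h Gg; case: (h Gg).
case: hgen => _; apply.
  split.
  - by move=> x [Gx _]; apply: G_orth.
  - by split; [apply: G_id | exists [::]].
  - move=> x y [Gx [l1 [h1 ex]]] [Gy [l2 [h2 ey]]]; rewrite /H; split.
      by apply: G_mul.
    exists (l1 ++ l2); rewrite ev_cat -ex -ey; split => // s; rewrite mem_cat => /orP [] ?;
     [exact: h1 | exact: h2].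
  - move=> x [Gx [l [hl ex]]]; rewrite /H; split; first by apply: G_inv.
    rewrite ex {ex Gx}.
    elim: l hl => [|s l IH] hl /=; first by exists [::]; rewrite einv_id.
    have Ss : S1 s by apply: hl; rewrite mem_head.
    have [l' [hl' e]] : exists l', (forall s, s \in l' -> S1 s) /\ einv (ev l) = ev l'.
      by apply: IH => y yl; apply: hl; rewrite in_cons yl orbT.
    exists (l' ++ [:: einv s]); split.
      by move=> y; rewrite mem_cat => /orP [/hl' // | ]; rewrite inE => /eqP ->; apply: S1_inv.
    rewrite einvM; last exact: G_orth (S1_G Ss).
    by rewrite ev_cat /= emulg1 e.
move=> r Rr; split; first exact: R'_G.
by exists [:: r]; split; [move=> s; rewrite inE => /eqP ->; left | rewrite /= emulg1].
Qed.

End Words.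
End Group.

Section Stab.
Variables (R : realType) (d : nat).
Local Notation Eu := (Eu R d).
Local Notation eid := (eid R d).
Variables (G : set Eu) (x0 : 'cV[R]_d) (R'' : seq Eu) (B : 'M[R]_d).
Hypotheses (G1 : G eid) (hB : B \in unitmx) (hBG : forall i, G (1%:M, col i B))
  (hp1 : property1 G x0 R'').

Lemma mul_cols (v : 'cV[R]_d) : B *m v = \sum_i v i ord0 *: col i B.
Proof.
apply/matrixP => a b; rewrite mxE summxE; apply: eq_bigr => i _.
by rewrite !mxE (ord1 b) mulrC.
Qed.

Lemma span_basis (j : 'I_d) : exists s : seq ('cV[R]_d * R),
  [/\ forall p, p \in s -> exists2 h, h \in R'' & p.1 = eact h x0,
      \sum_(p <- s) p.2 = 1 &
      x0 + delta_mx j ord0 = \sum_(p <- s) p.2 *: p.1].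
Proof.
set e := delta_mx j ord0 : 'cV[R]_d.
set v := invmx B *m e.
have inG : aff [set eact g x0 | g in G] (x0 + e).
  exists ((x0, 1 - \sum_i v i ord0) ::
          map (fun i => (x0 + col i B, v i ord0)) (index_enum 'I_d)).
  split.
  - move=> p; rewrite inE => /orP [/eqP -> | /mapP [i _ ->]] /=.
      by exists eid => //; rewrite eact_id.
    by exists (1%:M, col i B) => //; rewrite /eact /= mul1mx.
  - by rewrite big_cons big_map /= subrK.
  - rewrite big_cons big_map /=.
    have -> : e = B *m v by rewrite /v mulKVmx.
    rewrite mul_cols.
    under [X in _ = _ + X]eq_bigr => i _ do rewrite scalerDr.
    rewrite big_split /= -scaler_suml addrA -scalerDl subrK scale1r //.
have [hu hs he haff] := hp1.
rewrite -haff in inG; case: inG => s [h1 h2 h3].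
exists s; split => //.
move=> p /h1 [h hR <-]; by exists h.
Qed.

Lemma stability : exists Ks : R, 0 <= Ks /\
  forall (Q M : 'M[R]_d) (a : 'cV[R]_d) (eps : R), orthogonal_mx Q ->
    (forall h, h \in R'' -> sqnorm (a + M *m (Q *m (eact h x0 - x0))) <= eps) ->
    frob M <= Ks * eps.
Proof.
have [S hS] := choice span_basis.
exists (\sum_j (2 * (\sum_(p <- S j) p.2 ^+ 2) * (size (S j))%:R + 2)); split.
  apply: sumr_ge0 => j _; apply: addr_ge0 => //; apply: mulr_ge0 => //.
  by apply: mulr_ge0 => //; apply: sum_sq_ge0.
move=> Q M a eps oQ hyp.
have [_ _ eR'' _] := hp1.
have ha : sqnorm a <= eps.
  by have := hyp _ eR''; rewrite eact_id subrr !mulmx0 addr0.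
have eps0 : 0 <= eps by apply: le_trans ha; apply: sqnorm_ge0.
rewrite -(frob_orthr M oQ) frob_col mulr_suml; apply: ler_sum => j _.
set M' := M *m Q.
have [h1 h2 h3] := hS j.
have ej : delta_mx j ord0 = \sum_(p <- S j) p.2 *: (p.1 - x0).
  under eq_bigr => p _ do rewrite scalerBr.
  by rewrite sumrB -h3 -scaler_suml h2 scale1r addrC addKr.
have eM : col j M' = \sum_(p <- S j) p.2 *: (a + M' *m (p.1 - x0)) - a.
  under eq_bigr => p _ do rewrite scalerDr.
  rewrite big_split /= -scaler_suml h2 scale1r addrAC subrr add0r.
  rewrite colE ej mulmx_sumr; apply: eq_bigr => p _; by rewrite scalemxAr.
rewrite eM.
apply: le_trans (sqnormD2 _ _) _.
rewrite sqnormN.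
have hv : \sum_(p <- S j) sqnorm (a + M' *m (p.1 - x0)) <= (size (S j))%:R * eps.
  rewrite -sum1_size natr_sum mulr_suml big_seq [X in _ <= X]big_seq.
  apply: ler_sum => p /h1 [h hR ->]; rewrite mul1r /M' -mulmxA; exact: hyp.
have := sqnorm_sum (S j) (fun p => p.2) (fun p => a + M' *m (p.1 - x0)).
move=> hcs.
have hs0 := sum_sq_ge0 (S j) (fun p => p.2).
set X := sqnorm _ in hcs *.
set Y := \sum_(p <- S j) p.2 ^+ 2 in hcs hs0 *.
set Z := \sum_(p <- S j) sqnorm _ in hcs hv.
have : Y * Z <= Y * ((size (S j))%:R * eps) by apply: ler_wpM2l.
nra.
Qed.

End Stab.

Section Chain.
Variables (R : realType) (d : nat).
Local Notation Eu := (Eu R d).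
Local Notation eid := (eid R d).
Variables (G : set Eu) (x0 : 'cV[R]_d) (Rs : seq Eu) (R' : set Eu) (R'' : seq Eu).
Hypotheses (hG : is_subgroup G) (hgen : generates G R') (R'1 : R' eid)
  (eR'' : eid \in R'')
  (hRs : forall g h, R' g -> h \in R'' -> emul g h \in Rs).
Variable Ks : R.
Hypotheses (Ks0 : 0 <= Ks) (hKs : forall (Q M : 'M[R]_d) (a : 'cV[R]_d) (eps : R),
    orthogonal_mx Q ->
    (forall h, h \in R'' -> sqnorm (a + M *m (Q *m (eact h x0 - x0))) <= eps) ->
    frob M <= Ks * eps).
Definition fitH (u a : Eu -> 'cV[R]_d) (S : Eu -> 'M[R]_d) (rr : Eu -> R) :=
  (forall g, 0 <= rr g) /\
  (forall g, G g -> forall h, h \in Rs ->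
     sqnorm (rot h *m u (emul g h) - a g - S g *m (eact h x0 - x0)) <= rr g).

Section Fit.
Variables (u a : Eu -> 'cV[R]_d) (S : Eu -> 'M[R]_d) (rr : Eu -> R).
Hypotheses (rr0 : forall g, 0 <= rr g)
  (hfit : forall g, G g -> forall h, h \in Rs ->
     sqnorm (rot h *m u (emul g h) - a g - S g *m (eact h x0 - x0)) <= rr g).

Ltac vring := apply/matrixP => ? ?; rewrite !mxE; ring.

Definition Y z := rot z *m u z.
Definition Ag g := rot g *m a g.
Definition Sg g := rot g *m S g *m (rot g)^T.
Definition Del g w := Y (emul g w) - Y g - Sg g *m (eact (emul g w) x0 - eact g x0).

Lemma eact_diff g w : eact (emul g w) x0 - eact g x0 = rot g *m (eact w x0 - x0).
Proof. by rewrite eactM eactB. Qed.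

Lemma Sg_rot g (v : 'cV[R]_d) : G g -> Sg g *m (rot g *m v) = rot g *m (S g *m v).
Proof.
move=> Gg; rewrite /Sg -!mulmxA; congr (_ *m _); congr (_ *m _).
by rewrite mulmxA (G_orth hG Gg) mul1mx.
Qed.

Lemma gfit g h : G g -> h \in Rs ->
  sqnorm (Y (emul g h) - Ag g - Sg g *m (eact (emul g h) x0 - eact g x0)) <= rr g.
Proof.
move=> Gg hR; rewrite eact_diff Sg_rot // /Y /Ag rot_emul -mulmxA.
by rewrite -!mulmxBr (sqnorm_orth _ (G_orth hG Gg)); apply: hfit.
Qed.

Lemma R'_Rs r : R' r -> r \in Rs.
Proof. by move=> Rr; have := hRs Rr eR''; rewrite emulg1. Qed.
Lemma R''_Rs h : h \in R'' -> h \in Rs.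
Proof. by move=> hR; have := hRs R'1 hR; rewrite emul1g. Qed.

Lemma sqB_le (x y : 'cV[R]_d) (p q : R) : sqnorm x <= p -> sqnorm y <= q -> sqnorm (x - y) <= 2 * p + 2 * q.
Proof.
move=> hx hy; apply: le_trans (sqnormD2 _ _) _; rewrite sqnormN.
by apply: lerD; apply: ler_wpM2l.
Qed.

Lemma step_fwd g r : G g -> R' r ->
  sqnorm (Del g r) <= 4 * rr g /\
  frob (Sg (emul g r) - Sg g) <= Ks * (2 * rr g + 2 * rr (emul g r)).
Proof.
move=> Gg Rr; have Gr := R'_G hgen Rr; have Ggr := G_mul hG Gg Gr.
split.
  have e : Del g r = (Y (emul g r) - Ag g - Sg g *m (eact (emul g r) x0 - eact g x0))
     - (Y (emul g eid) - Ag g - Sg g *m (eact (emul g eid) x0 - eact g x0)).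
    by rewrite emulg1 subrr mulmx0 subr0 /Del; vring.
  rewrite e; have := sqB_le (gfit Gg (R'_Rs Rr)) (gfit Gg (R''_Rs eR'')).
  by move=> h; apply: le_trans h _; rewrite le_eqVlt; apply/orP; left; apply/eqP; ring.
apply: (hKs (Q := rot (emul g r))
   (a := Ag (emul g r) - Ag g - Sg g *m (eact (emul g r) x0 - eact g x0))).
  by apply: (G_orth hG).
move=> h hR.
have h1 := gfit Gg (hRs Rr hR).
have h2 := gfit Ggr (R''_Rs hR).
rewrite emulA in h2.
have := sqB_le h1 h2.
set z := emul g (emul r h).
have ez : eact z x0 - eact (emul g r) x0 = rot (emul g r) *m (eact h x0 - x0).
  by rewrite /z -emulA eact_diff.
rewrite -ez.
have -> : Y z - Ag g - Sg g *m (eact z x0 - eact g x0) -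
     (Y z - Ag (emul g r) - Sg (emul g r) *m (eact z x0 - eact (emul g r) x0)) =
   Ag (emul g r) - Ag g - Sg g *m (eact (emul g r) x0 - eact g x0) +
     (Sg (emul g r) - Sg g) *m (eact z x0 - eact (emul g r) x0).
  rewrite mulmxBl !mulmxBr.
  set P0 := Sg g *m _; set P1 := Sg g *m _; set P2 := Sg (emul g r) *m _.
  set P3 := Sg g *m _; set A1 := Ag (emul g r); set A0 := Ag g.
  set Yz := Y z.
  vring.
by [].
Qed.


Lemma sqmul_le (M : 'M[R]_d) (v : 'cV[R]_d) (p c : R) : frob M <= p -> sqnorm v = c ->
  sqnorm (M *m v) <= p * c.
Proof.
move=> hM hv; apply: le_trans (sqnorm_mulmx _ _) _; rewrite hv.
by apply: ler_wpM2r => //; rewrite -hv; apply: sqnorm_ge0.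
Qed.

Lemma step_fwd2 g r : G g -> R' r ->
  sqnorm (Del g r) + frob (Sg (emul g r) - Sg g) <= (4 + 2 * Ks) * (rr g + rr (emul g r)).
Proof.
move=> Gg Rr; have [h1 h2] := step_fwd Gg Rr.
have := rr0 g; have := rr0 (emul g r); nra.
Qed.

Lemma step_bwd2 g r : G g -> R' r ->
  sqnorm (Del g (einv r)) + frob (Sg (emul g (einv r)) - Sg g) <=
  (8 + 4 * sqnorm (eact r x0 - x0) * Ks + 2 * Ks) * (rr g + rr (emul g (einv r))).
Proof.
move=> Gg Rr.
have Gr := R'_G hgen Rr; have or := G_orth hG Gr.
set cr := sqnorm (eact r x0 - x0).
have cr0 : 0 <= cr by apply: sqnorm_ge0.
set g2 := emul g (einv r).
have G2 : G g2 by apply: G_mul => //; apply: G_inv.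
have e2 : emul g2 r = g by rewrite /g2 emulA emulVg // emulg1.
have [h1 h2] := step_fwd G2 Rr; rewrite e2 in h1 h2.
have eD : Del g (einv r) = - Del g2 r + (Sg g - Sg g2) *m (eact g x0 - eact g2 x0).
  rewrite /Del -/g2 e2 !mulmxBr !mulmxBl; vring.
have ec : sqnorm (eact g x0 - eact g2 x0) = cr.
  by rewrite -{1}e2 eact_diff (sqnorm_orth _ (G_orth hG G2)).
have h3 : frob (Sg g - Sg g2) <= Ks * (2 * rr g2 + 2 * rr g) by [].
have h4 := sqmul_le h3 ec.
have h5 : sqnorm (Del g (einv r)) <= 2 * (4 * rr g2) + 2 * (Ks * (2 * rr g2 + 2 * rr g) * cr).
  rewrite eD; apply: le_trans (sqnormD2 _ _) _; rewrite sqnormN.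
  by apply: lerD; apply: ler_wpM2l.
have h6 : frob (Sg g2 - Sg g) = frob (Sg g - Sg g2) by rewrite -frobN opprB.
rewrite -/g2 h6.
have := rr0 g; have := rr0 g2; nra.
Qed.

Lemma Del_id g : Del g eid = 0.
Proof. by rewrite /Del emulg1 !subrr mulmx0 subrr. Qed.

Lemma Del_comp g s w : Del g (emul s w) =
  Del (emul g s) w + Del g s +
  (Sg (emul g s) - Sg g) *m (eact (emul (emul g s) w) x0 - eact (emul g s) x0).
Proof. rewrite /Del -emulA !mulmxBr !mulmxBl; vring. Qed.

Lemma comp_step g s w (A Bv : R) : G g -> G s ->
  sqnorm (Del (emul g s) w) + frob (Sg (emul (emul g s) w) - Sg (emul g s)) <= A ->
  sqnorm (Del g s) + frob (Sg (emul g s) - Sg g) <= Bv ->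
  sqnorm (Del g (emul s w)) + frob (Sg (emul g (emul s w)) - Sg g) <=
  6 * A + (6 + 2 * sqnorm (eact w x0 - x0)) * Bv.
Proof.
move=> Gg Gs hA hB.
have Ggs : G (emul g s) by apply: G_mul.
set cw := sqnorm (eact w x0 - x0).
have cw0 : 0 <= cw by apply: sqnorm_ge0.
have [hA1 hA2] : sqnorm (Del (emul g s) w) <= A /\
        frob (Sg (emul (emul g s) w) - Sg (emul g s)) <= A.
  split; apply: le_trans hA; [rewrite lerDl frob_ge0 // | rewrite lerDr sqnorm_ge0 //].
have [hB1 hB2] : sqnorm (Del g s) <= Bv /\ frob (Sg (emul g s) - Sg g) <= Bv.
  split; apply: le_trans hB; [rewrite lerDl frob_ge0 // | rewrite lerDr sqnorm_ge0 //].
have ec : sqnorm (eact (emul (emul g s) w) x0 - eact (emul g s) x0) = cw.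
  by rewrite eact_diff (sqnorm_orth _ (G_orth hG Ggs)).
have hE := sqmul_le hB2 ec.
have B0 : 0 <= Bv by apply: le_trans hB2; apply: frob_ge0.
have h1 : sqnorm (Del g (emul s w)) <= 4 * A + 4 * Bv + 2 * (Bv * cw).
  rewrite Del_comp; apply: le_trans (sqnormD2 _ _) _.
  have h0 := sqnormD2 (Del (emul g s) w) (Del g s).
  nra.
have h2 : frob (Sg (emul g (emul s w)) - Sg g) <= 2 * A + 2 * Bv.
  have -> : Sg (emul g (emul s w)) - Sg g =
    (Sg (emul (emul g s) w) - Sg (emul g s)) + (Sg (emul g s) - Sg g).
    by rewrite -emulA addrA subrK.
  apply: le_trans (frobD2 _ _) _; nra.
nra.
Qed.

End Fit.

Lemma step_S1 s : S1 R' s -> exists K, 0 <= K /\ forall u a S rr, fitH u a S rr ->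
  forall g, G g ->
  sqnorm (Del u S g s) + frob (Sg S (emul g s) - Sg S g) <= K * (rr g + rr (emul g s)).
Proof.
case=> [Rr | [r [Rr ->]]].
  exists (4 + 2 * Ks); split; first by apply: addr_ge0 => //; apply: mulr_ge0.
  move=> u a S rr [h1 h2] g Gg; exact: (step_fwd2 h1 h2 Gg Rr).
exists (8 + 4 * sqnorm (eact r x0 - x0) * Ks + 2 * Ks); split.
  have := sqnorm_ge0 (eact r x0 - x0) => c0.
  by apply: addr_ge0; [apply: addr_ge0 => //; apply: mulr_ge0 => //; apply: mulr_ge0|apply: mulr_ge0].
move=> u a S rr [h1 h2] g Gg; exact: (step_bwd2 h1 h2 Gg Rr).
Qed.

Lemma chain l : (forall s, s \in l -> S1 R' s) ->
  exists K, exists P : seq Eu, [/\ 0 <= K, (forall p, p \in P -> G p) &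
   forall u a S rr, fitH u a S rr -> forall g, G g ->
     sqnorm (Del u S g (ev l)) + frob (Sg S (emul g (ev l)) - Sg S g)
      <= K * \sum_(p <- P) rr (emul g p)].
Proof.
elim: l => [|s l IH] hl.
  exists 0, [::]; split => // u a S rr _ g Gg.
  by rewrite /= Del_id emulg1 subrr frob0 sqnorm0 !mul0r addr0.
have Ss : S1 R' s by apply: hl; rewrite mem_head.
have Gs := S1_G hG hgen Ss.
have [K' [P' [K'0 GP' hP']]] : exists K, exists P : seq Eu, [/\ 0 <= K, (forall p, p \in P -> G p) &
   forall u a S rr, fitH u a S rr -> forall g, G g ->
     sqnorm (Del u S g (ev l)) + frob (Sg S (emul g (ev l)) - Sg S g)
      <= K * \sum_(p <- P) rr (emul g p)].
  by apply: IH => x xl; apply: hl; rewrite in_cons xl orbT.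
have [K1 [K10 hK1]] := step_S1 Ss.
set w := ev l; set cw := sqnorm (eact w x0 - x0).
have cw0 : 0 <= cw by apply: sqnorm_ge0.
exists (6 * K' + (6 + 2 * cw) * K1), ([:: eid; s] ++ map (emul s) P'); split.
- by apply: addr_ge0; apply: mulr_ge0 => //; apply: addr_ge0 => //; apply: mulr_ge0.
- move=> p; rewrite mem_cat => /orP [|/mapP [q qP ->]].
    by rewrite !inE => /orP [] /eqP ->; [apply: G_id | ].
  by apply: G_mul => //; apply: GP'.
move=> u a S rr hf g Gg /=; rewrite -/w.
have Ggs : G (emul g s) by apply: G_mul.
have := comp_step (w := w) (S := S) (u := u) Gg Gs (hP' _ _ _ _ hf _ Ggs) (hK1 _ _ _ _ hf _ Gg).
move=> h; apply: le_trans h _.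
rewrite big_cons big_cons big_map emulg1.
under eq_bigr => p _ do rewrite -emulA.
set T := \sum_(p <- P') rr (emul (emul g s) p).
have [rr0 _] := hf.
have T0 : 0 <= T by apply: sumr_ge0 => p _; apply: rr0.
set X := rr g + rr (emul g s).
have X0 : 0 <= X by apply: addr_ge0; apply: rr0.
rewrite [rr g + _]addrA -/X.
have p1 : 0 <= K' * X by apply: mulr_ge0.
have p2 : 0 <= K1 * T by apply: mulr_ge0.
have p3 : 0 <= cw * (K1 * T) by apply: mulr_ge0.
rewrite -/cw; nra.
Qed.

End Chain.

Section Korn.
Variables (R : realType) (d : nat).
Local Notation Eu := (Eu R d).
Local Notation eid := (eid R d).
Variables (G H : set Eu) (C : seq Eu).
Hypotheses (hG : is_subgroup G) (hN : normal_sub H G) (hC : is_reps G H C).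
Variable b : 'I_d -> 'cV[R]_d.
Definition tr i : Eu := (1%:M, b i).
Hypothesis Gt : forall i, G (tr i).
Variable phi : 'I_d -> Eu -> R.
Hypothesis pphi : forall i, per G H (phi i).

Lemma tr_comm i j : emul (tr i) (tr j) = emul (tr j) (tr i).
Proof. by rewrite /emul /tr /= !mul1mx addrC. Qed.

Lemma tr_orth i : orthogonal_mx (rot (tr i)).
Proof. by apply: (G_orth hG); apply: Gt. Qed.

Lemma tr_b i j : emul (emul (tr i) (tr j)) (einv (tr j)) = tr i.
Proof. by rewrite emulA emulgV ?emulg1 //; apply: tr_orth. Qed.
Lemma tr_a i j : emul (emul (tr i) (tr j)) (einv (tr i)) = tr j.
Proof. by rewrite tr_comm tr_b. Qed.

Lemma per_mul (f1 f2 : Eu -> R) : per G H f1 -> per G H f2 -> per G H (fun g => f1 g * f2 g).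
Proof. by move=> p1 p2 g t Gg Ht /=; rewrite p1 // p2. Qed.

Lemma korn_pair i j :
  \sum_(c <- C) (phi i (emul c (tr j)) - phi i c) * (phi j (emul c (tr i)) - phi j c) =
  \sum_(c <- C) (phi i (emul c (einv (tr i))) - phi i c) * (phi j (emul c (einv (tr j))) - phi j c).
Proof.
have oi := tr_orth i; have oj := tr_orth j.
have Gi' := G_inv hG (Gt i); have Gj' := G_inv hG (Gt j).
have pexp : forall (x y z w : R), (x - y) * (z - w) = x * z - x * w - y * z + y * w.
  by move=> x y z w; ring.
under eq_bigr => c _ do rewrite pexp.
under [RHS]eq_bigr => c _ do rewrite pexp.
rewrite !big_split /= !sumrN.
have e1 : \sum_(c <- C) phi i (emul c (tr j)) * phi j (emul c (tr i)) =
          \sum_(c <- C) phi i (emul c (einv (tr i))) * phi j (emul c (einv (tr j))).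
  set f := fun g => phi i (emul g (einv (tr i))) * phi j (emul g (einv (tr j))).
  have pf : per G H f by apply: per_mul; apply: per_shift.
  have E := reindexC hG hN hC (f := f) (w := emul (tr i) (tr j)) (G_mul hG (Gt i) (Gt j)) pf.
  rewrite -E; apply: eq_bigr => c _; rewrite /f.
  by rewrite (emulA c _ (einv (tr i))) (emulA c _ (einv (tr j))) tr_a tr_b.
have e2 : \sum_(c <- C) phi i (emul c (tr j)) * phi j c =
          \sum_(c <- C) phi i c * phi j (emul c (einv (tr j))).
  set f := fun g => phi i g * phi j (emul g (einv (tr j))).
  have pf : per G H f by apply: per_mul => //; apply: per_shift.
  rewrite -(reindexC hG hN hC (f := f) (w := tr j) (Gt j) pf).
  by apply: eq_bigr => c _; rewrite /f emulA emulgV // emulg1.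
have e3 : \sum_(c <- C) phi i c * phi j (emul c (tr i)) =
          \sum_(c <- C) phi i (emul c (einv (tr i))) * phi j c.
  set f := fun g => phi i (emul g (einv (tr i))) * phi j g.
  have pf : per G H f by apply: per_mul => //; apply: per_shift.
  rewrite -(reindexC hG hN hC (f := f) (w := tr i) (Gt i) pf).
  by apply: eq_bigr => c _; rewrite /f emulA emulgV // emulg1.
rewrite e1 e2 e3; ring.
Qed.

Lemma korn_nonneg :
  0 <= \sum_(c <- C) \sum_i \sum_j
        (phi i (emul c (tr j)) - phi i c) * (phi j (emul c (tr i)) - phi j c).
Proof.
rewrite exchange_big /=.
under eq_bigr => i _ do rewrite exchange_big /=.
under eq_bigr => i _ do under eq_bigr => j _ do rewrite korn_pair.
under eq_bigr => i _ do rewrite exchange_big /=.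
rewrite exchange_big /=.
apply: sumr_ge0 => c _.
set X := fun i => phi i (emul c (einv (tr i))) - phi i c.
have -> : \sum_i \sum_j X i * X j = (\sum_i X i) ^+ 2.
  by rewrite expr2 mulr_suml; apply: eq_bigr => i _; rewrite mulr_sumr.
exact: sqr_ge0.
Qed.

Variables (K E : Eu -> 'M[R]_d).
Hypotheses (hKE : forall c, c \in C -> forall i j,
                phi i (emul c (tr j)) - phi i c = K c i j + E c i j)
           (hK : forall c, c \in C -> forall i j, K c j i = - K c i j).

Lemma sum2_lin (a0 b0 : R) (f g : 'I_d -> 'I_d -> R) :
  \sum_i \sum_j (a0 * f i j + b0 * g i j) =
  a0 * (\sum_i \sum_j f i j) + b0 * (\sum_i \sum_j g i j).
Proof.
rewrite (mulr_sumr _ _ _ a0) (mulr_sumr _ _ _ b0) -big_split; apply: eq_bigr => i _.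
by rewrite !mulr_sumr -big_split.
Qed.

Lemma korn_ineq : \sum_(c <- C) frob (K c) <= 6 * \sum_(c <- C) frob (E c).
Proof.
have h0 := korn_nonneg.
have pt : forall c, c \in C -> forall i j,
   (phi i (emul c (tr j)) - phi i c) * (phi j (emul c (tr i)) - phi j c) <=
   (- (1/2)) * (K c i j ^+ 2) + 3 / 2 * (E c i j ^+ 2 + E c j i ^+ 2).
  move=> c cC i j; rewrite !hKE // (hK cC i j).
  set k := K c i j; set e1 := E c i j; set e2 := E c j i.
  have : 0 <= (k / 2 - (e2 - e1)) ^+ 2 by apply: sqr_ge0.
  have : 0 <= (e1 - e2) ^+ 2 by apply: sqr_ge0.
  move=> p q. nra.
have h1 : \sum_(c <- C) \sum_i \sum_j
        (phi i (emul c (tr j)) - phi i c) * (phi j (emul c (tr i)) - phi j c) <=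
        \sum_(c <- C) ((- (1/2)) * frob (K c) + 3 * frob (E c)).
  rewrite big_seq [X in _ <= X]big_seq; apply: ler_sum => c cC.
  have -> : (- (1/2)) * frob (K c) + 3 * frob (E c) =
     \sum_i \sum_j ((- (1/2)) * (K c i j ^+ 2) + 3 / 2 * (E c i j ^+ 2 + E c j i ^+ 2)).
    rewrite sum2_lin /frob.
    have -> : \sum_i \sum_j (E c i j ^+ 2 + E c j i ^+ 2) = 2 * \sum_i \sum_j E c i j ^+ 2.
      under eq_bigr => i _ do rewrite big_split /=.
      rewrite big_split /= [X in _ + X]exchange_big /=; ring.
    field.
  done.
  by apply: ler_sum => i _; apply: ler_sum => j _; apply: pt.
have := le_trans h0 h1.
rewrite big_split /= -!mulr_sumr.
set A := \sum_(c <- C) frob (K c); set B := \sum_(c <- C) frob (E c).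
lra.
Qed.

End Korn.

Section Reals.
Variable R : realType.

Lemma lim_lin (x z k : R) : 0 <= k ->
  (forall del, 0 < del -> del <= 1 -> x <= z + del * k) -> x <= z.
Proof.
move=> k0 h; apply/ler_addgt0Pr => e e0.
have p : 0 < k + 1 + e by lra.
set del := e / (k + 1 + e).
have d0 : 0 < del by apply: divr_gt0.
have d1 : del <= 1 by rewrite ler_pdivrMr // mul1r; lra.
have dk : del * k <= e.
  rewrite /del mulrAC ler_pdivrMr //; nra.
apply: le_trans (h _ d0 d1) _; lra.
Qed.

Lemma sqrt_scale (K m sa sb : R) : 1 <= K -> 0 <= m -> 0 <= sb -> sa <= K * sb ->
  Num.sqrt (m * sa) <= K * Num.sqrt (m * sb).
Proof.
move=> K1 m0 sb0 h.
have K0 : 0 <= K by lra.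
have -> : K * Num.sqrt (m * sb) = Num.sqrt (K ^+ 2 * (m * sb)).
  by rewrite (sqrtrM _ (sqr_ge0 K)) sqrtr_sqr ger0_norm.
rewrite ler_sqrt; last by apply: mulr_ge0; [apply: sqr_ge0 | apply: mulr_ge0].
have : m * sa <= m * (K * sb) by apply: ler_wpM2l.
have : K * (m * sb) <= K ^+ 2 * (m * sb).
  apply: ler_wpM2r; first by apply: mulr_ge0.
  by rewrite expr2; rewrite -{1}(mul1r K); apply: ler_wpM2r.
nra.
Qed.

End Reals.

Section Dist.
Variables (R : realType) (d : nat).
Local Notation Eu := (Eu R d).
Implicit Types (U : (Eu -> 'cV[R]_d) -> Prop) (v : Eu -> 'cV[R]_d).

Definition dset U (Rs : seq Eu) v := [set r : R | exists w, U w /\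
         r = Num.sqrt (\sum_(h <- Rs) sqnorm (v h - w h))].

Lemma dset_lb U Rs v : lbound (dset U Rs v) 0.
Proof. by move=> r [w [_ ->]]; apply: sqrtr_ge0. Qed.

Lemma dset_ne U Rs v : (exists w, U w) -> nonempty (dset U Rs v).
Proof. by case=> w Uw; exists (Num.sqrt (\sum_(h <- Rs) sqnorm (v h - w h))); exists w. Qed.

Lemma distU_ge0 U Rs v : (exists w, U w) -> 0 <= distU U Rs v.
Proof. by move=> ne; apply: lb_le_inf; [apply: dset_ne | apply: dset_lb]. Qed.

Lemma distU_le U Rs v w : U w ->
  distU U Rs v <= Num.sqrt (\sum_(h <- Rs) sqnorm (v h - w h)).
Proof.
move=> Uw; apply: (ge_inf (E := dset U Rs v)); first by exists 0; apply: dset_lb.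
by exists w.
Qed.

Lemma distU_adh U Rs v del : (exists w, U w) -> 0 < del ->
  exists w, U w /\ Num.sqrt (\sum_(h <- Rs) sqnorm (v h - w h)) < distU U Rs v + del.
Proof.
move=> ne d0.
have hi : has_inf (dset U Rs v) by split; [apply: dset_ne | exists 0; apply: dset_lb].
have [r [w [Uw ->]] hr] := inf_adherent d0 hi.
by exists w.
Qed.

Lemma distU_ext U Rs v v' : (forall h, h \in Rs -> v h = v' h) ->
  distU U Rs v = distU U Rs v'.
Proof.
move=> e; rewrite /distU; congr inf; apply: funext => r; apply: propext.
split=> [] [w [Uw ->]]; exists w; split => //; congr Num.sqrt; apply: eq_big_seq => h hR;
  by rewrite e.
Qed.

Lemma distU_mono U1 U2 Rs v : (forall w, U2 w -> U1 w) -> (exists w, U2 w) ->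
  distU U1 Rs v <= distU U2 Rs v.
Proof.
move=> sub ne; apply: lb_le_inf; first exact: dset_ne.
move=> r [w [Uw ->]]; apply: distU_le; exact: sub.
Qed.

End Dist.

Section Point.
Variables (R : realType) (d : nat).
Local Notation Eu := (Eu R d).
Local Notation eid := (eid R d).
Variables (G : set Eu) (x0 : 'cV[R]_d) (Rs : seq Eu).
Hypotheses (hG : is_subgroup G) (RsG : forall h, h \in Rs -> G h) (eRs : eid \in Rs).

Lemma sum_const_seq (I : Type) (s : seq I) (c : R) : \sum_(h <- s) c = (size s)%:R * c.
Proof. by elim: s => [|x s IH]; rewrite ?big_nil ?mul0r // big_cons IH /= mulrSr mulrDl mul1r addrC. Qed.

Lemma sqrt_le_sq (x y : R) : 0 <= x -> Num.sqrt x <= y -> x <= y ^+ 2.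
Proof.
move=> x0' h; have s0 := sqrtr_ge0 x; have := sqr_sqrtr x0'.
set s := Num.sqrt x in h s0 *; move=> e; rewrite -e; nra.
Qed.

Lemma Uiso_ne : exists w, Uiso x0 Rs w.
Proof.
exists (fun _ => 0); exists 0, 0; split; first by rewrite trmx0 oppr0.
by move=> g _; rewrite mulmx0 mul0mx addr0.
Qed.

Lemma Uiso00_ne : exists w, Uiso00 0 x0 Rs w.
Proof.
exists (fun _ => 0); exists 0, 0; split; first by rewrite trmx0 oppr0.
  by move=> i j _; rewrite mxE.
by move=> g _; rewrite mulmx0 mul0mx addr0.
Qed.

Lemma Uiso00_sub w : Uiso00 0 x0 Rs w -> Uiso x0 Rs w.
Proof. by case=> a [S [h1 _ h3]]; exists a, S. Qed.

Lemma Uiso00_rot (c : 'cV[R]_d) : Uiso00 0 x0 Rs (fun h => (rot h)^T *m c).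
Proof.
exists c, 0; split; first by rewrite trmx0 oppr0.
  by move=> i j _; rewrite mxE.
move=> h hR; rewrite mul0mx addr0 mulmxA orthC ?mul1mx //.
by apply: (G_orth hG); apply: RsG.
Qed.

Lemma Uiso00_S0 w : Uiso00 0 x0 Rs w -> exists c, forall h, h \in Rs -> w h = (rot h)^T *m c.
Proof.
case=> a [S [_ hS hw]]; exists a => h hR.
have S0 : S = 0 by apply/matrixP => i j; rewrite mxE; apply: hS.
have oh := G_orth hG (RsG hR).
by rewrite -[w h]mul1mx -oh -mulmxA (hw _ hR) S0 mul0mx addr0.
Qed.

Variable u : Eu -> 'cV[R]_d.
Definition D1 g := distU (Uiso x0 Rs) Rs (fun h => u (emul g h)).
Definition D2 g := distU (Uiso00 0 x0 Rs) Rs (fun h => u (emul g h)).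
Definition Gr g := \sum_(h <- Rs) sqnorm (u (emul g h) - (rot h)^T *m u g).

Lemma D1_ge0 g : 0 <= D1 g. Proof. exact: distU_ge0 _ _ Uiso_ne. Qed.
Lemma D2_ge0 g : 0 <= D2 g. Proof. exact: distU_ge0 _ _ Uiso00_ne. Qed.
Lemma D1_le_D2 g : D1 g <= D2 g.
Proof. apply: (distU_mono _ _ _ Uiso00_ne); exact: Uiso00_sub. Qed.

Lemma D2_le_Gr g : D2 g ^+ 2 <= Gr g.
Proof.
have h := distU_le Rs (fun h => u (emul g h)) (Uiso00_rot (u g)).
rewrite -(sqr_sqrtr (a := Gr g)); last by apply: sumr_ge0 => h' _; apply: sqnorm_ge0.
have := D2_ge0 g; rewrite /D2 => h0.
by rewrite ler_pXn2r // ?nnegrE ?sqrtr_ge0.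
Qed.

Lemma Gr_le_D2 g : Gr g <= (2 + 2 * (size Rs)%:R) * D2 g ^+ 2.
Proof.
set c3 := 2 + 2 * (size Rs)%:R.
have c30 : 0 <= c3 by apply: addr_ge0 => //; apply: mulr_ge0.
have D0 := D2_ge0 g.
apply: (lim_lin (k := c3 * (2 * D2 g + 1))); first by apply: mulr_ge0 => //; lra.
move=> del d0 d1.
have [w [Uw hw]] := distU_adh Rs (fun h => u (emul g h)) Uiso00_ne d0.
have [c hc] := Uiso00_S0 Uw.
set rho := \sum_(h <- Rs) sqnorm (u (emul g h) - w h) in hw.
have rho0 : 0 <= rho by apply: sumr_ge0 => h _; apply: sqnorm_ge0.
have hr : rho <= (D2 g + del) ^+ 2 by apply: sqrt_le_sq => //; apply: ltW.
have hc0 : sqnorm (c - u g) <= rho.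
  have := le_sum_mem (F := fun h => sqnorm (u (emul g h) - w h)) (fun y _ => sqnorm_ge0 _) eRs.
  by rewrite emulg1 (hc _ eRs) /= trmx1 mul1mx sqnormB.
have : Gr g <= 2 * rho + 2 * ((size Rs)%:R * sqnorm (c - u g)).
  rewrite /Gr -sum_const_seq /rho.
  have -> : 2 * (\sum_(h <- Rs) sqnorm (u (emul g h) - w h)) + 2 * (\sum_(h <- Rs) sqnorm (c - u g))
     = \sum_(h <- Rs) (2 * sqnorm (u (emul g h) - w h) + 2 * sqnorm (c - u g)).
    by rewrite big_split /= -!mulr_sumr.
  rewrite big_seq [X in _ <= X]big_seq.
  apply: ler_sum => h hR.
  have -> : u (emul g h) - (rot h)^T *m u g = (u (emul g h) - w h) + (rot h)^T *m (c - u g).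
    by rewrite (hc _ hR) mulmxBr addrA subrK.
  apply: le_trans (sqnormD2 _ _) _.
  rewrite (sqnorm_orth _ (orth_trmx (G_orth hG (RsG hR)))) //.
have sz0 : 0 <= (size Rs)%:R :> R by [].
have : (size Rs)%:R * sqnorm (c - u g) <= (size Rs)%:R * rho by apply: ler_wpM2l.
rewrite /c3 => h1 h2.
have : rho <= D2 g ^+ 2 + del * (2 * D2 g + 1) by nra.
nra.
Qed.

End Point.

Section Main.
Variables (R : realType) (d : nat).
Local Notation Eu := (Eu R d).
Local Notation eid := (eid R d).
Variables (G H : set Eu) (x0 : 'cV[R]_d) (Rs C : seq Eu) (B : 'M[R]_d) (u : Eu -> 'cV[R]_d).
Hypotheses (hG : is_subgroup G) (RsG : forall h, h \in Rs -> G h) (eRs : eid \in Rs)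
  (hB : B \in unitmx).
Definition bB := fun i : 'I_d => col i B.
Hypotheses (Gt : forall i, G (tr bB i)) (hN : normal_sub H G) (hC : is_reps G H C)
  (pu : periodic G H u).
Variable KP : 'I_d -> R * seq Eu.
Hypothesis hKP : forall j, [/\ 0 <= (KP j).1, (forall p, p \in (KP j).2 -> G p) &
   forall u a S rr, fitH G x0 Rs u a S rr -> forall g, G g ->
     sqnorm (Del x0 u S g (tr bB j)) + frob (Sg S (emul g (tr bB j)) - Sg S g)
      <= (KP j).1 * \sum_(p <- (KP j).2) rr (emul g p)].

Definition cR := \sum_(h <- Rs) sqnorm (eact h x0 - x0).
Definition cS := frob (invmx B)^T * frob (invmx B).
Definition fBt := frob B^T.
Definition c4 := 2 + 12 * cR * cS * fBt * \sum_j (KP j).1 * (size (KP j).2)%:R.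

Lemma c4_ge0 : 0 <= c4.
Proof.
apply: addr_ge0 => //; apply: mulr_ge0.
  apply: mulr_ge0; last exact: frob_ge0.
  apply: mulr_ge0; last by apply: mulr_ge0; apply: frob_ge0.
  by apply: mulr_ge0 => //; apply: sumr_ge0 => h _; apply: sqnorm_ge0.
by apply: sumr_ge0 => j _; apply: mulr_ge0 => //; case: (hKP j).
Qed.

Lemma D1_per (del : R) : per G H (fun g => (D1 x0 Rs u g + del) ^+ 2).
Proof.
move=> g t Gg Ht /=; congr (_ ^+ 2); congr (_ + _).
apply: distU_ext => h hR /=.
have Gh := RsG hR; have oh := G_orth hG Gh.
have -> : emul (emul g t) h = emul (emul g h) (emul (emul (einv h) t) h).
  by rewrite !emulA (emulKV _ oh).
apply: pu; first by apply: G_mul.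
by apply: (H_conj hG hN Gh Ht).
Qed.

Lemma entry_sub m n (A1 A2 : 'M[R]_(m, n)) i j : (A1 - A2) i j = A1 i j - A2 i j.
Proof. by rewrite !mxE. Qed.

Lemma colmul (A M : 'M[R]_d) i j : (A *m col j M) i ord0 = (A *m M) i j.
Proof. by rewrite !mxE; apply: eq_bigr => k _; rewrite mxE. Qed.

Lemma F4 : \sum_(c <- C) D2 x0 Rs u c ^+ 2 <= c4 * \sum_(c <- C) D1 x0 Rs u c ^+ 2.
Proof.
set D1' := D1 x0 Rs u; set D2' := D2 x0 Rs u.
have D10 : forall g, 0 <= D1' g by move=> g; apply: D1_ge0.
apply: (lim_lin (k := c4 * \sum_(c <- C) (2 * D1' c + 1))).
  apply: mulr_ge0; first exact: c4_ge0.
  by apply: sumr_ge0 => c _; have := D10 c; lra.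
move=> del d0 d1.
have ex : forall g, exists t : (Eu -> 'cV[R]_d) * 'cV[R]_d * 'M[R]_d,
   [/\ (forall h, h \in Rs -> rot h *m t.1.1 h = t.1.2 + t.2 *m (eact h x0 - x0)),
       t.2^T = - t.2 &
       Num.sqrt (\sum_(h <- Rs) sqnorm (u (emul g h) - t.1.1 h)) < D1' g + del].
  move=> g; have [w [[a [S [hS hw]]] hlt]] := distU_adh Rs (fun h => u (emul g h)) (Uiso_ne x0 Rs) d0.
  by exists (w, a, S).
have [f hf] := choice ex.
pose w := fun g => (f g).1.1; pose a := fun g => (f g).1.2; pose S := fun g => (f g).2.
pose rr := fun g => \sum_(h <- Rs) sqnorm (u (emul g h) - w g h).
have rr0 : forall g, 0 <= rr g by move=> g; apply: sumr_ge0 => h _; apply: sqnorm_ge0.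
have rrD1 : forall g, rr g <= (D1' g + del) ^+ 2.
  move=> g; have [_ _ hl] := hf g; apply: sqrt_le_sq => //; exact: ltW.
have hfit : fitH G x0 Rs u a S rr.
  split => // g Gg h hR.
  have [hw _ _] := hf g.
  rewrite /a /S -addrA -opprD -(hw _ hR) -mulmxBr.
  rewrite (sqnorm_orth _ (G_orth hG (RsG hR))).
  by apply: (le_sum_mem (F := fun h => sqnorm (u (emul g h) - w g h))) => // y _; apply: sqnorm_ge0.
have Sskew : forall g, (S g)^T = - S g by move=> g; have [] := hf g.
have D2b : forall g, G g -> D2' g ^+ 2 <= 2 * rr g + 2 * (frob (S g) * cR).
  move=> g Gg.
  have hdl := distU_le Rs (fun h => u (emul g h)) (Uiso00_rot x0 hG RsG (a g)).
  have hb : D2' g ^+ 2 <= Num.sqrt (\sum_(h <- Rs) sqnorm (u (emul g h) - (rot h)^T *m a g)) ^+ 2.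
    by rewrite ler_pXn2r // ?nnegrE ?sqrtr_ge0 //; apply: D2_ge0.
  apply: le_trans hb _.
  rewrite sqr_sqrtr; last by apply: sumr_ge0 => h' _; apply: sqnorm_ge0.
  rewrite /cR /rr.
  have -> : 2 * (\sum_(h <- Rs) sqnorm (u (emul g h) - w g h)) +
            2 * (frob (S g) * \sum_(h <- Rs) sqnorm (eact h x0 - x0)) =
            \sum_(h <- Rs) (2 * sqnorm (u (emul g h) - w g h) +
                             2 * (frob (S g) * sqnorm (eact h x0 - x0))).
    by rewrite big_split /= -!mulr_sumr.
  rewrite big_seq [X in _ <= X]big_seq; apply: ler_sum => h hR.
  have oh := G_orth hG (RsG hR).
  have [hw _ _] := hf g.
  have -> : u (emul g h) - (rot h)^T *m a g =
       (u (emul g h) - w g h) + (rot h)^T *m (S g *m (eact h x0 - x0)).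
    have e : w g h = (rot h)^T *m (a g + S g *m (eact h x0 - x0)).
      by rewrite -(hw _ hR) mulmxA oh mul1mx.
    by rewrite e mulmxDr opprD addrA subrK.
  apply: le_trans (sqnormD2 _ _) _.
  rewrite (sqnorm_orth _ (orth_trmx oh)).
  by apply: lerD => //; apply: ler_wpM2l => //; apply: sqnorm_mulmx.
pose phi := fun (i : 'I_d) g => (B^T *m u g) i ord0.
pose K := fun c => B^T *m S c *m B.
pose E := fun c => \matrix_(i, j) (phi i (emul c (tr bB j)) - phi i c - K c i j).
have pphi : forall i, per G H (phi i).
  by move=> i g t Gg Ht; rewrite /phi pu.
have hKE : forall c, c \in C -> forall i j,
    phi i (emul c (tr bB j)) - phi i c = K c i j + E c i j.
  by move=> c _ i j; rewrite /E mxE; ring.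
have hK : forall c, c \in C -> forall i j, K c j i = - K c i j.
  move=> c _ i j.
  have : (K c)^T = - K c by rewrite /K !trmx_mul trmxK Sskew mulNmx mulmxN mulmxA.
  by move/matrixP => /(_ i j); rewrite !mxE.
have kor := korn_ineq hG hN hC Gt pphi hKE hK.
have FS : forall c, frob (S c) <= cS * frob (K c).
  move=> c.
  have -> : S c = (invmx B)^T *m K c *m invmx B.
    rewrite /K !mulmxA -trmx_mul mulmxV // trmx1 mul1mx -mulmxA mulmxV // mulmx1 //.
  rewrite /cS; apply: le_trans (frob_mulmx _ _) _.
  rewrite mulrAC; apply: ler_wpM2r; first exact: frob_ge0.
  exact: frob_mulmx.
pose zeta := fun j c => u (emul c (tr bB j)) - u c - S c *m col j B.
have FE : forall c, frob (E c) <= fBt * \sum_j sqnorm (zeta j c).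
  move=> c; rewrite frob_col mulr_sumr; apply: ler_sum => j _.
  have -> : col j (E c) = B^T *m zeta j c.
    apply/matrixP => i k; rewrite (ord1 k) /zeta /phi /K.
    rewrite [LHS]mxE [LHS]mxE !mulmxBr !entry_sub.
    by rewrite mulmxA colmul.
  exact: sqnorm_mulmx.
have Zb : forall j c, G c -> sqnorm (zeta j c) <= (KP j).1 * \sum_(p <- (KP j).2) rr (emul c p).
  move=> j c Gc; have [_ _ hj] := hKP j.
  have := hj _ _ _ _ hfit _ Gc.
  have oc := G_orth hG Gc.
  have -> : Del x0 u S c (tr bB j) = rot c *m zeta j c.
    rewrite /Del /Y eact_diff /Sg rot_emul /tr /= mulmx1.
    have -> : eact (1%:M, bB j) x0 - x0 = col j B by rewrite /eact /= mul1mx addrC addKr.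
    rewrite /zeta !mulmxBr -!mulmxA; congr (_ - _ *m _).
    by rewrite (mulmxA (rot c)^T) oc mul1mx.
  rewrite (sqnorm_orth _ oc) => h; apply: le_trans h.
  by rewrite lerDl frob_ge0.
set Q := \sum_(c <- C) (D1' c + del) ^+ 2.
have Rb : forall p, G p -> \sum_(c <- C) rr (emul c p) <= Q.
  move=> p Gp.
  rewrite /Q -(reindexC hG hN hC (f := fun g => (D1' g + del) ^+ 2) (w := p) Gp (D1_per del)).
  by apply: ler_sum => c _; apply: rrD1.
have Q0 : 0 <= Q by apply: sumr_ge0 => c _; apply: sqr_ge0.
have T1 : \sum_(c <- C) \sum_j sqnorm (zeta j c) <=
          \sum_j (KP j).1 * ((size (KP j).2)%:R * Q).
  rewrite exchange_big /=; apply: ler_sum => j _.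
  have [Kj0 GPj _] := hKP j.
  have s1 : \sum_(c <- C) sqnorm (zeta j c) <=
            \sum_(c <- C) (KP j).1 * \sum_(p <- (KP j).2) rr (emul c p).
    rewrite big_seq [X in _ <= X]big_seq; apply: ler_sum => c cC; apply: Zb.
    apply: (C_G hC cC).
  apply: le_trans s1 _.
  rewrite -mulr_sumr; apply: ler_wpM2l => //.
  rewrite exchange_big /= -sum_const_seq big_seq [X in _ <= X]big_seq.
  by apply: ler_sum => p pP; apply: Rb; apply: GPj.
set KS := \sum_j (KP j).1 * (size (KP j).2)%:R.
have eT : \sum_j (KP j).1 * ((size (KP j).2)%:R * Q) = KS * Q.
  by rewrite /KS mulr_suml; apply: eq_bigr => j _; rewrite mulrA.
rewrite eT in T1.
have s2 : \sum_(c <- C) frob (E c) <= fBt * (KS * Q).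
  have a1 : \sum_(c <- C) frob (E c) <= \sum_(c <- C) fBt * \sum_j sqnorm (zeta j c).
    by apply: ler_sum => c _; apply: FE.
  apply: le_trans a1 _.
  by rewrite -mulr_sumr; apply: ler_wpM2l => //; apply: frob_ge0.
have s3 : \sum_(c <- C) frob (S c) <= cS * \sum_(c <- C) frob (K c).
  by rewrite mulr_sumr; apply: ler_sum => c _; apply: FS.
have s4 : \sum_(c <- C) D2' c ^+ 2 <= 2 * \sum_(c <- C) rr c + 2 * (\sum_(c <- C) frob (S c) * cR).
  have -> : 2 * \sum_(c <- C) rr c + 2 * (\sum_(c <- C) frob (S c) * cR) =
     \sum_(c <- C) (2 * rr c + 2 * (frob (S c) * cR)).
    by rewrite big_split /= -!mulr_sumr -mulr_suml.
  rewrite big_seq [X in _ <= X]big_seq.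
  by apply: ler_sum => c cC; apply: D2b; apply: (C_G hC cC).
have s5 : \sum_(c <- C) rr c <= Q by apply: ler_sum => c _; apply: rrD1.
have s6 : Q <= \sum_(c <- C) D1' c ^+ 2 + del * \sum_(c <- C) (2 * D1' c + 1).
  rewrite mulr_sumr -big_split /=; apply: ler_sum => c _.
  have := D10 c; nra.
have cR0 : 0 <= cR by apply: sumr_ge0 => h _; apply: sqnorm_ge0.
have cS0 : 0 <= cS by apply: mulr_ge0; apply: frob_ge0.
have fB0 : 0 <= fBt by apply: frob_ge0.
have KS0 : 0 <= KS by apply: sumr_ge0 => j _; apply: mulr_ge0 => //; case: (hKP j).
set sS := \sum_(c <- C) frob (S c) in s3 s4.
set sK := \sum_(c <- C) frob (K c) in kor s3.
set sE := \sum_(c <- C) frob (E c) in kor s2.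
set s1' := \sum_(c <- C) D1' c ^+ 2 in s6 *.
set sl := \sum_(c <- C) (2 * D1' c + 1) in s6 *.
set sr := \sum_(c <- C) rr c in s4 s5.
set s2' := \sum_(c <- C) D2' c ^+ 2 in s4 *.
have hS : sS <= 6 * cS * fBt * KS * Q.
  apply: le_trans s3 _.
  have : cS * sK <= cS * (6 * sE) by apply: ler_wpM2l.
  have : cS * (6 * sE) <= cS * (6 * (fBt * (KS * Q))).
    by apply: ler_wpM2l => //; apply: ler_wpM2l.
  move=> a1 a2; apply: le_trans a2 _; apply: le_trans a1 _.
  by rewrite le_eqVlt; apply/orP; left; apply/eqP; ring.
have hS2 : s2' <= c4 * Q.
  apply: le_trans s4 _.
  have : sS * cR <= 6 * cS * fBt * KS * Q * cR by apply: ler_wpM2r.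
  rewrite /c4 -/KS => a1.
  have e : (2 + 12 * cR * cS * fBt * KS) * Q = 2 * Q + 2 * (6 * cS * fBt * KS * Q * cR) by ring.
  rewrite e; apply: lerD; first by apply: ler_wpM2l.
  by rewrite -mulr_suml -/sS; apply: ler_wpM2l.
apply: le_trans hS2 _.
have c40 := c4_ge0.
have : c4 * Q <= c4 * (s1' + del * sl) by apply: ler_wpM2l.
move=> a1; apply: le_trans a1 _.
by rewrite le_eqVlt; apply/orP; left; apply/eqP; ring.
Qed.

End Main.

Unset Implicit Arguments. Set Strict Implicit.

Theorem corollary4p7 (R : realType) (d : nat) (G : set (Eu R d))
  (x0 : 'cV[R]_d) (Rs : seq (Eu R d)) :
  space_group G ->
  (forall g h, G g -> G h -> eact g x0 = eact h x0 -> g = h) ->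
  property2 G x0 Rs ->
  exists c : R, 0 < c /\
    forall (N : nat) (C : seq (Eu R d)),
      (0 < N)%N ->
      normal_sub (powset (transl_sub G) N) G ->
      is_reps G (powset (transl_sub G) N) C ->
      forall u : Eu R d -> 'cV[R]_d,
        periodic G (powset (transl_sub G) N) u ->
        let n1 := normU (Uiso x0 Rs) C Rs u in
        let n2 := normU (Uiso00 0 x0 Rs) C Rs u in
        let n3 := gradnorm C Rs u in
        (n1 <= c * n2 /\ n2 <= c * n1) /\
        (n1 <= c * n3 /\ n3 <= c * n1) /\
        (n2 <= c * n3 /\ n3 <= c * n2).
Proof.
move=> hsg _ hp2.
case: hsg => hG _ [B [hB hBG]].
case: hp2 => _ RsG [R' [R'' [R'1 hgen hp1 hRs]]].
have hp1' := hp1; case: hp1' => _ _ eR'' _.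
have eRs : eid R d \in Rs by have := hRs _ _ R'1 eR''; rewrite emulg1.
have [Ks [Ks0 hKs]] := stability (G_id hG) hB hBG hp1.
have Gt : forall i, G (tr (bB B) i) := hBG.
have exKP : forall j, exists kp : R * seq (Eu R d),
  [/\ 0 <= kp.1, (forall p, p \in kp.2 -> G p) &
   forall u a S rr, fitH G x0 Rs u a S rr -> forall g, G g ->
     sqnorm (Del x0 u S g (tr (bB B) j)) + frob (Sg S (emul g (tr (bB B) j)) - Sg S g)
      <= kp.1 * \sum_(p <- kp.2) rr (emul g p)].
  move=> j; have [l [hl el]] := gen_words hG hgen (Gt j).
  have [K [P [K0 GP hP]]] := chain hG hgen R'1 eR'' hRs Ks0 hKs hl.
  exists (K, P); split => // u a S rr hf g Gg /=; rewrite el; exact: (hP u a S rr hf g Gg).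
have [KP hKP] := choice exKP.
set c3 : R := 2 + 2 * (size Rs)%:R.
set c4' := c4 x0 Rs B KP.
have c30 : 0 <= c3 by rewrite /c3; apply: addr_ge0 => //; apply: mulr_ge0.
have c40 : 0 <= c4' by apply: (c4_ge0 hKP).
set c := 1 + c3 + c4' + c3 * c4'.
have c1 : 1 <= c by have := mulr_ge0 c30 c40; rewrite /c; lra.
exists c; split; first by lra.
move=> N C _ hN hC u pu n1 n2 n3.
have CG : forall g, g \in C -> G g by move=> g gC; apply: (C_G hC gC).
set s1 := \sum_(g <- C) D1 x0 Rs u g ^+ 2.
set s2 := \sum_(g <- C) D2 x0 Rs u g ^+ 2.
set s3 := \sum_(g <- C) Gr Rs u g.
have e1 : n1 = Num.sqrt ((size C)%:R^-1 * s1) by [].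
have e2 : n2 = Num.sqrt ((size C)%:R^-1 * s2) by [].
have e3 : n3 = Num.sqrt ((size C)%:R^-1 * s3) by [].
have s10 : 0 <= s1 by apply: sumr_ge0 => g _; apply: sqr_ge0.
have s20 : 0 <= s2 by apply: sumr_ge0 => g _; apply: sqr_ge0.
have s30 : 0 <= s3 by apply: sumr_ge0 => g _; apply: sumr_ge0 => h _; apply: sqnorm_ge0.
have m0 : 0 <= (size C)%:R^-1 :> R by rewrite invr_ge0.
have h12 : s1 <= s2.
  apply: ler_sum => g _; rewrite ler_pXn2r ?nnegrE ?D1_ge0 ?D2_ge0 //; exact: D1_le_D2.
have h23 : s2 <= s3.
  rewrite /s2 /s3 big_seq [X in _ <= X]big_seq; apply: ler_sum => g gC; apply: (D2_le_Gr x0 hG RsG).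
have h32 : s3 <= c3 * s2.
  rewrite /s2 /s3 mulr_sumr big_seq [X in _ <= X]big_seq; apply: ler_sum => g gC.
  exact: (Gr_le_D2 x0 hG RsG eRs).
have h21 : s2 <= c4' * s1 := F4 hG RsG hB Gt hN hC pu hKP.
have p1 : c3 * s2 <= c3 * (c4' * s1) by apply: ler_wpM2l.
have q1 : 0 <= c3 * s2 by apply: mulr_ge0.
have q2 : 0 <= c4' * s1 by apply: mulr_ge0.
have q3 : 0 <= c3 * (c4' * s1) by apply: mulr_ge0.
have cc := mulr_ge0 c30 c40.
have sc : forall sa sb k : R, 0 <= sb -> 0 <= k -> k <= c -> sa <= k * sb -> sa <= c * sb.
  move=> sa sb k sb0 k0 kc h; apply: le_trans h _; exact: ler_wpM2r.
have k1 : 1 <= c by [].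
have k3 : c3 <= c by rewrite /c; lra.
have k4 : c4' <= c by rewrite /c; lra.
have k34 : c3 * c4' <= c by rewrite /c; lra.
rewrite e1 e2 e3.
split; [split|split; split]; apply: sqrt_scale => //.
- by apply: (sc _ _ 1) => //; rewrite mul1r.
- exact: (sc _ _ c4').
- by apply: (sc _ _ 1) => //; rewrite mul1r; apply: le_trans h23.
- by apply: (sc _ _ (c3 * c4')) => //; apply: le_trans h32 _; rewrite -mulrA.
- by apply: (sc _ _ 1) => //; rewrite mul1r.
- exact: (sc _ _ c3).
Qed.
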